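(* Let $\mathbf A,\mathbf B\in\mathsf{ICM}$. Every ring homomorphism $h:\mathbf A^-\to\mathbf B^-$ is also a homomorphism $h:\mathbf A\to\mathbf B$ of implicitly closed meadows, i.e. it also satisfies $h(a^* )=h(a)^*$ and $h(r_p(a))=r_p(h(a))$ for all $a\in A$ and all primes $p$.
   Context: A field is weakly rooted if it has characteristic $0$, or prime characteristic $p$ with every element having a $p$-th root. Weak inverse: $a^*=a^{-1}$ if $a\ne0$, $0^*=0$; weak $p$-root: $r_p(a)=\sqrt[p]{a}$ if the characteristic is $p$, else $0$. An implicitly closed field is a weakly rooted field (ring language $\{+,\cdot,-,0,1\}$) expanded by $(\,)^*$ and all $r_p$; $\mathsf{ICM}$ is the class of algebras isomorphic to subalgebras of direct products of implicitly closed fields. $\mathbf A^-$ denotes the ring reduct of $\mathbf A$. *)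

(* Defs.v *)
From HB Require Import structures.
From mathcomp Require Import all_boot all_algebra.
Set Implicit Arguments. Unset Strict Implicit. Unset Printing Implicit Defensive.
Import GRing.Theory.
Local Open Scope ring_scope.

(* The root operations are indexed by nat; only prime indices are symbols
   of the signature (non-prime indices are ignored everywhere). *)
Record ICAlg := {
  car :> Type;
  alg_add : car -> car -> car;
  alg_mul : car -> car -> car;
  alg_opp : car -> car;
  alg_zero : car;
  alg_one : car;
  alg_winv : car -> car;
  alg_root : nat -> car -> car }.

Definition ring_hom (A B : ICAlg) (h : A -> B) : Prop :=
  (forall x y, h (alg_add x y) = alg_add (h x) (h y)) /\
  (forall x y, h (alg_mul x y) = alg_mul (h x) (h y)) /\
  (forall x, h (alg_opp x) = alg_opp (h x)) /\
  h (alg_zero A) = alg_zero B /\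
  h (alg_one A) = alg_one B.

Definition ic_hom (A B : ICAlg) (h : A -> B) : Prop :=
  ring_hom h /\
  (forall x, h (alg_winv x) = alg_winv (h x)) /\
  (forall p, prime p -> forall x, h (alg_root p x) = alg_root p (h x)).

Definition weakly_rooted (F : fieldType) : Prop :=
  [pchar F] =i pred0 \/
  exists2 p, p \in [pchar F] & forall a : F, exists b : F, b ^+ p = a.

(* An implicitly closed field: a weakly rooted field together with its
   weak p-roots r_p (r_p a = the p-th root of a in characteristic p, else 0;
   the p-th root is unique in characteristic p, so r_p is determined). *)
Record ICField := {
  icF :> fieldType;
  icF_wr : weakly_rooted icF;
  icR : nat -> icF -> icF;
  icR_spec : forall p, prime p -> forall a : icF,
      if p \in [pchar icF] then icR p a ^+ p = a else icR p a = 0 }.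

(* the implicitly closed field as an algebra; weak inverse = GRing.inv (0^-1 = 0) *)
Definition ICField_alg (F : ICField) : ICAlg :=
  {| car := F; alg_add := +%R; alg_mul := *%R; alg_opp := -%R;
     alg_zero := 0; alg_one := 1; alg_winv := GRing.inv; alg_root := @icR F |}.

Definition prod_alg (I : Type) (F : I -> ICField) : ICAlg :=
  {| car := forall i, F i;
     alg_add := fun x y i => x i + y i;
     alg_mul := fun x y i => x i * y i;
     alg_opp := fun x i => - x i;
     alg_zero := fun _ => 0;
     alg_one := fun _ => 1;
     alg_winv := fun x i => (x i)^-1;
     alg_root := fun p x i => @icR (F i) p (x i) |}.

(* ICM: isomorphic to a subalgebra of a direct product of implicitly closed
   fields, i.e. embeddable by an injective homomorphism into such a product *)
Definition ICM (A : ICAlg) : Prop :=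
  exists (I : Type) (F : I -> ICField) (e : A -> prod_alg F),
    injective e /\ ic_hom e.

(* Main.v *)
Require Import Defs.
From mathcomp Require Import all_boot all_algebra.
From Stdlib Require Import FunctionalExtensionality.
Set Implicit Arguments. Unset Strict Implicit.
Import GRing.Theory.
Local Open Scope ring_scope.

Fixpoint natc (A : ICAlg) (n : nat) : A :=
  match n with 0 => alg_zero A | n.+1 => alg_add (alg_one A) (natc A n) end.
Fixpoint apow (A : ICAlg) (x : A) (n : nat) : A :=
  match n with 0 => alg_one A | n.+1 => alg_mul x (apow x n) end.

Lemma hom_natc (A B : ICAlg) (h : A -> B) n : ring_hom h -> h (natc A n) = natc B n.
Proof.
move=> [ha [hm [ho [h0 h1]]]]; elim: n => [|n IH] //=.
by rewrite ha h1 IH.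
Qed.

Lemma hom_apow (A B : ICAlg) (h : A -> B) x n : ring_hom h -> h (apow x n) = apow (h x) n.
Proof.
move=> [ha [hm [ho [h0 h1]]]]; elim: n => [|n IH] //=.
by rewrite hm IH.
Qed.

Lemma prod_natc I (F : I -> ICField) n i : (natc (prod_alg F) n) i = n%:R.
Proof. elim: n => [|n IH] //=. by rewrite IH mulrS. Qed.

Lemma prod_apow I (F : I -> ICField) (x : prod_alg F) n i : (apow x n) i = (x i) ^+ n.
Proof. elim: n => [|n IH] //=. by rewrite IH exprS. Qed.

Definition Pinv (A : ICAlg) (a x : A) :=
  alg_mul (alg_mul a a) x = a /\ alg_mul (alg_mul x x) a = x.

Definition Proot (A : ICAlg) p (a x : A) :=
  alg_mul (natc A p) x = alg_zero A /\
  alg_mul (alg_add (alg_one A) (alg_opp (alg_mul (natc A p) (alg_winv (natc A p)))))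
          (alg_add (apow x p) (alg_opp a)) = alg_zero A.

Lemma inv_ok (F : fieldType) (a : F) : a * a * a^-1 = a /\ a^-1 * a^-1 * a = a^-1.
Proof.
have [->|a0] := eqVneq a 0; first by rewrite invr0 !mulr0.
by split; rewrite -mulrA ?mulfV ?mulVf // mulr1.
Qed.

Lemma inv_uniq (F : fieldType) (a x : F) : a * a * x = a -> x * x * a = x -> x = a^-1.
Proof.
have [->|a0] := eqVneq a 0; first by move=> _; rewrite mulr0 invr0 => <-.
move=> h _. apply: (mulfI a0). rewrite mulfV //.
apply: (mulfI a0). by rewrite mulr1 mulrA.
Qed.

Lemma root_ok (F : ICField) p (pp : prime p) (a : F) :
  p%:R * icR p a = 0 /\ (1 + -(p%:R * (p%:R)^-1)) * (icR p a ^+ p + - a) = 0.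
Proof.
have := icR_spec pp a. case: ifP => hp.
  by rewrite (pcharf0 hp) mul0r invr0 mul0r oppr0 addr0 mul1r => ->; rewrite subrr.
move=> ->; rewrite mulr0; split => //.
have c0 : (p%:R : F) != 0 by apply/negP => /eqP c0; move: hp; rewrite inE pp /= c0 eqxx.
by rewrite mulfV // subrr mul0r.
Qed.

Lemma root_uniq (F : ICField) p (pp : prime p) (a x : F) :
  p%:R * x = 0 -> (1 + -(p%:R * (p%:R)^-1)) * (x ^+ p + - a) = 0 -> x = icR p a.
Proof.
have := icR_spec pp a. case: ifP => hp.
  rewrite (pcharf0 hp) mul0r invr0 mul0r oppr0 addr0 mul1r => hr _ /eqP.
  rewrite subr_eq0 -{1}hr => /eqP hx.
  apply/eqP; rewrite -subr_eq0.
  have : (x - icR p a) ^+ p == 0.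
    rewrite -(pFrobenius_autE hp) pFrobenius_autB_comm; last exact: mulrC.
    by rewrite !pFrobenius_autE hx subrr.
  by rewrite expf_eq0 => /andP [].
move=> -> /eqP; rewrite mulf_eq0 => /orP [|/eqP //].
by move=> c0; move: hp; rewrite inE pp /= c0.
Qed.

Section Emb.
Variables (A : ICAlg) (I : Type) (F : I -> ICField) (e : A -> prod_alg F).
Hypothesis einj : injective e.
Hypothesis ehom : ic_hom e.

Lemma emb_inv (a x : A) : Pinv a x <-> x = alg_winv a.
Proof.
case: ehom => [[ea [em [eo [e0 e1]]]] [ei er]].
split.
  move=> [h1 h2]; apply: einj; apply: functional_extensionality_dep => i.
  rewrite ei /=; apply: inv_uniq.
    by have := f_equal (fun f => f i) (f_equal e h1); rewrite !em.
  by have := f_equal (fun f => f i) (f_equal e h2); rewrite !em.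
move=> ->; split; apply: einj; apply: functional_extensionality_dep => i;
  rewrite !em ei /=; by case: (inv_ok (e a i)).
Qed.

Lemma emb_root p (pp : prime p) (a x : A) : Proot p a x <-> x = alg_root p a.
Proof.
have rh := ehom.1.
case: ehom => [[ea [em [eo [e0 e1]]]] [ei er]].
split.
  move=> [h1 h2]; apply: einj; apply: functional_extensionality_dep => i.
  rewrite er //=; apply: root_uniq => //.
    have := f_equal (fun f => f i) (f_equal e h1).
    by rewrite em (hom_natc _ rh) e0 /= prod_natc.
  have := f_equal (fun f => f i) (f_equal e h2).
  by rewrite em !ea eo em ei eo e1 e0 (hom_apow _ _ rh) (hom_natc _ rh) /= !prod_natc prod_apow.
move=> ->; split; apply: einj; apply: functional_extensionality_dep => i.
  rewrite em (hom_natc _ rh) e0 er //= prod_natc. by case: (root_ok pp (e a i)).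
rewrite em !ea eo em ei eo e1 e0 (hom_apow _ _ rh) (hom_natc _ rh) /= !prod_natc prod_apow er //.
by case: (root_ok pp (e a i)).
Qed.
End Emb.

Theorem mainTheorem17 (A B : ICAlg) (hA : ICM A) (hB : ICM B) (h : A -> B) :
  ring_hom h -> ic_hom h.
Proof.
move=> rh.
case: hA => [I [F [e [einj ehom]]]].
case: hB => [J [G [f [finj fhom]]]].
have hinv : forall x, h (alg_winv x) = alg_winv (h x).
  move=> x; apply/(emb_inv finj fhom).
  have [h1 h2] := proj2 (emb_inv einj ehom x (alg_winv x)) erefl.
  case: rh => [ha [hm _]].
  by split; rewrite -!hm ?h1 ?h2.
split => //; split => // p pp x.
apply/(emb_root finj fhom pp).
have [h1 h2] := proj2 (emb_root einj ehom pp x (alg_root p x)) erefl.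
have rh' := rh.
case: rh => [ha [hm [ho [h0 h1']]]].
split.
  by rewrite -(hom_natc _ rh') -hm h1 h0.
by rewrite -(hom_natc _ rh') -hinv -hm -(hom_apow _ _ rh') -!ho -h1' -!ha -hm h2 h0.
Qed.
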